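(* Let $S$ be a sectoroid. Consider the sheaf of $\mathbb{C}$-vector spaces $\mathcal{F}:=\bigoplus_{c\in\mathbb{C}}\mathbb{C}_{S^\vee+c}$ on $\mathbb{C}_t$, with the $\mathbb{C}_a$-equivariant structure given by the direct sum of the canonical isomorphisms $T_a^{-1}\mathbb{C}_{S^\vee+c}\cong\mathbb{C}_{S^\vee+c-a}$. Then the ring of endomorphisms of $\mathcal{F}$ in the abelian category of $\mathbb{C}_a$-equivariant sheaves of $\mathbb{C}$-vector spaces on $\mathbb{C}_t$ is isomorphic to $\Lambda_0^S$; the isomorphism sends $T^d$ ($d\in S^\vee$) to the direct sum over $c\in\mathbb{C}$ of the morphisms $\mathbb{C}_{S^\vee+c}\to\mathbb{C}_{S^\vee+c+d}$ which are the identity on $S^\vee+c+d$.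
   Context: For a sectoroid $S$ (an open subset of the real oriented blow-up $\widetilde{\mathbb{C}}_\hbar$ of $\mathbb{C}_\hbar$ at $0$ that is a union of open sectors $\{(z,\theta):0\le|z|<\epsilon,\theta_1<\theta<\theta_2\}$), let $S^\circ$ be its part over $\hbar\neq0$, $\mathrm{Cone}(S)=\{h\in\mathbb{C}: rh\in\varpi(S^\circ)\text{ for some }r>0\}$, and $S^\vee=\{a\in\mathbb{C}:\Re(a\overline b)\ge0\ \forall b\in\mathrm{Cone}(S)\}$, a closed convex cone containing no line. $\Lambda_0^S$ is the ring of formal sums $\sum_{c\in S^\vee}a_cT^c$ ($a_c\in\mathbb{C}$) such that for every compact $K\subset\mathbb{C}$ only finitely many $c\in K$ have $a_c\ne0$, with multiplication $T^cT^d=T^{c+d}$ extended by convolution. $\mathbb{C}_Z$ denotes the constant sheaf on a closed set $Z$ extended by zero. $\mathbb{C}_t$ is the complex plane, $\mathbb{C}_a$ is $\mathbb{C}$ regarded as a discrete additive group acting on $\mathbb{C}_t$ by translations $T_a(t)=t+a$; a $\mathbb{C}_a$-equivariant sheaf is a sheaf $\mathcal{F}$ with isomorphisms $T_a^{-1}\mathcal{F}\cong\mathcal{F}$ satisfying the cocycle condition, and morphisms are those compatible with these isomorphisms. *)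

(* Defs.v *)
From HB Require Import structures.
From mathcomp Require Import all_boot all_order all_algebra.
From mathcomp Require Import all_classical all_reals all_analysis.
From mathcomp Require Import complex.

Set Implicit Arguments.
Unset Strict Implicit.
Unset Printing Implicit Defensive.
Import Order.TTheory GRing.Theory Num.Theory.
Local Open Scope classical_set_scope.
Local Open Scope ring_scope.

Section Sectoroids.
Variable R : realType.
Local Notation C := R[i].

Definition cmod (z : C) : R := Num.sqrt (complex.Re z ^+ 2 + complex.Im z ^+ 2).

Definition is_openC (U : set C) : Prop :=
  forall z, U z -> exists e : R, 0 < e /\ forall w, cmod (w - z) < e -> U w.

(* An open sector {(z,theta) : 0 <= |z| < eps, th1 < theta < th2}
   of the real oriented blow-up, given by its data (eps, th1, th2). *)
Record sector := Sector { sec_eps : R; sec_th1 : R; sec_th2 : R }.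

Definition sector_ok (s : sector) : Prop :=
  0 < sec_eps s /\ sec_th1 s < sec_th2 s.

Definition in_sector_punct (s : sector) (z : C) : Prop :=
  0 < cmod z < sec_eps s /\
  exists th : R, sec_th1 s < th < sec_th2 s /\
     z = Complex (cmod z * cos th) (cmod z * sin th).

(* A sectoroid S is a (nonempty) union of open sectors; it is given by the
   family Sig of sectors whose union it is. *)
Definition sectoroid (Sig : set sector) : Prop :=
  Sig !=set0 /\ forall s, Sig s -> sector_ok s.

(* varpi(S^circ) : the part of S over hbar <> 0, viewed in C *)
Definition Scirc (Sig : set sector) : set C :=
  [set z | exists s, Sig s /\ in_sector_punct s z].

Definition Cone (Sig : set sector) : set C :=
  [set h | exists r : R, 0 < r /\ Scirc Sig (r%:C%C * h)].

Definition Sdual (Sig : set sector) : set C :=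
  [set a | forall b, Cone Sig b -> 0 <= complex.Re (a * (b^*)%C)].

(* Lambda_0^S : formal sums sum_c a_c T^c encoded by their coefficient
   function c |-> a_c; support in S^vee and locally finite (finitely many
   nonzero coefficients in every compact set, i.e. in every closed disc). *)
Definition Lambda0 (Sig : set sector) (f : C -> C) : Prop :=
  (forall c, f c != 0 -> Sdual Sig c) /\
  (forall n : R, finite_set [set c | cmod c <= n /\ f c != 0]).

(* product of Lambda_0^S: convolution, T^c T^d = T^(c+d) *)
Definition lam_conv (f g : C -> C) : C -> C :=
  fun e => \sum_(c \in [set: C]) (f c * g (e - c)).

Definition monom (d : C) : C -> C := fun c => if c == d then 1 else 0.

(* A section of F over an open U is encoded as s : C -> C -> C, where
   s t c is the value at t of its component in C_{S^vee + c}
   (set to 0 outside U).  Conditions: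
   - component c is supported in U /\ (S^vee + c);
   - component c is locally constant on U /\ (S^vee + c)
     (sections of C_Z over U = locally constant functions on U /\ Z);
   - locally only finitely many components are nonzero (sections of the
     sheaf direct sum are locally finite sums). *)
Definition is_section (Sig : set sector) (U : set C) (s : C -> C -> C) : Prop :=
  [/\ (forall t c, s t c != 0 -> U t /\ Sdual Sig (t - c)),
      (forall t c, U t -> Sdual Sig (t - c) ->
         exists e : R, 0 < e /\
           forall t', cmod (t' - t) < e -> Sdual Sig (t' - c) -> s t' c = s t c) &
      (forall t, U t -> exists e : R, 0 < e /\
         finite_set [set c | exists t', cmod (t' - t) < e /\ s t' c != 0])].

Record opens := Opens { oset : set C; oset_open : is_openC oset }.

Record section (Sig : set sector) (U : opens) := Section_ {
  sfun :> C -> C -> C;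
  sfunP : is_section Sig (oset U) sfun }.

Definition endo (Sig : set sector) := forall U : opens, section Sig U -> section Sig U.

(* phi is an endomorphism of F in the category of C_a-equivariant sheaves of
   C-vector spaces: C-linear on each F(U), compatible with restrictions, and
   compatible with the equivariant structure
   T_a^{-1} C_{S^vee+c} ~ C_{S^vee+c-a}, i.e. with s |-> s'(t,c) = s(t+a,c+a)
   from F(U+a) to F(U). *)
Definition is_equiv_endo (Sig : set sector) (phi : endo Sig) : Prop :=
  [/\ (forall (U : opens) (s1 s2 s3 : section Sig U) (k : C),
         (forall t c, s3 t c = k * s1 t c + s2 t c) ->
         forall t c, phi U s3 t c = k * phi U s1 t c + phi U s2 t c),
      (forall U V : opens, oset V `<=` oset U ->
         forall (s : section Sig U) (s' : section Sig V),
         (forall t c, oset V t -> s' t c = s t c) ->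
         forall t c, oset V t -> phi V s' t c = phi U s t c) &
      (forall (a : C) (U U' : opens), (forall t, oset U' (t + a) <-> oset U t) ->
         forall (s : section Sig U') (s' : section Sig U),
         (forall t c, s' t c = s (t + a) (c + a)) ->
         forall t c, phi U s' t c = phi U' s (t + a) (c + a))].

Definition endo_eq (Sig : set sector) (phi psi : endo Sig) : Prop :=
  forall U s t c, phi U s t c = psi U s t c.

(* phi is the direct sum over c of the morphisms C_{S^vee+c} -> C_{S^vee+c+d}
   that are the identity on S^vee+c+d *)
Definition shift_morph (Sig : set sector) (d : C) (phi : endo Sig) : Prop :=
  forall U s t e, phi U s t e = if `[< Sdual Sig (t - e) >] then s t (e - d) else 0.

End Sectoroids.

(* Main.v *)
Require Import Defs.
From HB Require Import structures.
From mathcomp Require Import all_boot all_order all_algebra.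
From mathcomp Require Import all_classical all_reals all_analysis.
From mathcomp Require Import complex.
From mathcomp Require Import ring lra.
From mathcomp Require Import finmap.
Import Order.TTheory GRing.Theory Num.Theory.
Local Open Scope classical_set_scope.
Local Open Scope ring_scope.

Set Implicit Arguments.
Unset Strict Implicit.

Section Basics.
Local Open Scope complex_scope.
Variable R : realType.
Local Notation C := R[i].
Implicit Types z w : C.

Lemma cmodE z : (cmod z)%:C = `|z|.
Proof. by rewrite normc_def. Qed.

Lemma cmod_ge0 z : 0 <= cmod z.
Proof. exact: sqrtr_ge0. Qed.

Lemma cmodD z w : cmod (z + w) <= cmod z + cmod w.
Proof. by rewrite -lecR rmorphD /= !cmodE ler_normD. Qed.

Lemma cmodN z : cmod (- z) = cmod z.
Proof. by apply: complexI; rewrite !cmodE normrN. Qed.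

Lemma cmodB z w : cmod (z - w) = cmod (w - z).
Proof. by rewrite -cmodN opprB. Qed.

Lemma cmodM z w : cmod (z * w) = cmod z * cmod w.
Proof. by apply: complexI; rewrite rmorphM /= !cmodE normrM. Qed.

Lemma cmod0 : cmod (0 : C) = 0.
Proof. by rewrite /cmod /= expr0n /= addr0 sqrtr0. Qed.

Lemma cmodR (r : R) : cmod r%:C = `|r|.
Proof. by rewrite /cmod /= expr0n /= addr0 sqrtr_sqr. Qed.

Lemma Re_le z : `|complex.Re z| <= cmod z.
Proof.
rewrite /cmod -(sqrtr_sqr (complex.Re z)) ler_sqrt ?addr_ge0 ?sqr_ge0 //.
by rewrite lerDl sqr_ge0.
Qed.

Lemma Im_le z : `|complex.Im z| <= cmod z.
Proof.
rewrite /cmod -(sqrtr_sqr (complex.Im z)) ler_sqrt ?addr_ge0 ?sqr_ge0 //.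
by rewrite lerDr sqr_ge0.
Qed.

Lemma cmod_le_ReIm z : cmod z <= `|complex.Re z| + `|complex.Im z|.
Proof.
have h : 0 <= `|complex.Re z| + `|complex.Im z| by rewrite addr_ge0.
rewrite /cmod -(ger0_norm h) -(sqrtr_sqr (_ + _)).
rewrite ler_sqrt ?sqr_ge0 // sqrrD -(real_normK (num_real (complex.Re z))).
rewrite -(real_normK (num_real (complex.Im z))).
by rewrite lerD2r lerDl mulrn_wge0 // mulr_ge0.
Qed.
End Basics.

Section Cover.
Local Open Scope complex_scope.
Variable R : realType.

Lemma cover1D (P : R -> R -> Prop) a b : a <= b ->
 (forall l r l' r', P l r -> l <= l' -> r' <= r -> P l' r') ->
 (forall l m m' r, a <= m <= b -> m' <= m -> P l m -> P m' r -> P l r) ->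
 (forall x, a <= x <= b -> exists2 d, 0 < d & P (x - d) (x + d)) ->
 P a b.
Proof.
move=> ab mono uni loc.
pose E := [set m | a <= m <= b /\ P a m].
have Ea : E a.
  split; first by rewrite lexx ab.
  have [d d0 Pd] := loc a (ltac:(by rewrite lexx ab)).
  by apply: (mono _ _ _ _ Pd); rewrite ?lerBlDr ?lerDl ?ltW.
have hsE : has_sup E by split; [exists a | exists b => m [/andP[]]].
set s := sup E.
have as_ : a <= s by apply: sup_upper_bound.
have sb : s <= b by apply: ge_sup; [exists a | move=> m [/andP[]]].
have [d d0 Pd] := loc s (ltac:(by rewrite as_ sb)).
have [m [/andP[am mb] Pam] sdm] := sup_adherent d0 hsE.
have Pas : P a (s + d).
  by apply: (uni a m (s - d)) => //; [rewrite am mb | exact: ltW].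
have [bsd|sdb] := lerP b (s + d / 2).
  apply: (mono _ _ _ _ Pas); rewrite ?lexx //; apply: (le_trans bsd).
  by rewrite lerD2l ler_pdivrMr // ler_pMr // ler1n.
have : E (s + d / 2).
  split; first by rewrite (le_trans as_) ?lerDl ?divr_ge0 ?ltW // sdb.
  by apply: (mono _ _ _ _ Pas); rewrite ?lexx // lerD2l ler_pdivrMr // ler_pMr // ler1n.
move/(sup_upper_bound hsE); rewrite -/s.
by rewrite gerDl leNgt divr_gt0.
Qed.
End Cover.
Section Compact.
Local Open Scope complex_scope.
Variable R : realType.
Local Notation C := R[i].

Lemma cmod_sub_le (c t : C) : cmod (c - t) <=
  `|complex.Re c - complex.Re t| + `|complex.Im c - complex.Im t|.
Proof. by case: c t => a b [x y]; apply: cmod_le_ReIm. Qed.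

Lemma locfin_disc (A : set C) :
  (forall t, exists2 e, 0 < e & finite_set (A `&` [set c | cmod (c - t) < e])) ->
  forall n : R, finite_set (A `&` [set c | cmod c <= n]).
Proof.
move=> loc n; set N := `|n|.
have N0 : 0 <= N by exact: normr_ge0.
have NN : - N <= N by rewrite -subr_ge0 opprK addr_ge0.
have step1 : forall x : R, exists2 w, 0 < w & finite_set (A `&`
    [set c | `|complex.Re c - x| < w /\ - N <= complex.Im c <= N]).
  move=> x.
  pose P l r := exists2 w, 0 < w & finite_set (A `&`
    [set c | `|complex.Re c - x| < w /\ l <= complex.Im c <= r]).
  apply: (@cover1D R P); first exact: NN.
  - move=> l r l' r' [w w0 fw] ll' rr'; exists w => //.
    apply: sub_finite_set fw => c [Ac [h1 /andP[h2 h3]]]; split => //; split => //.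
    by rewrite (le_trans ll' h2) (le_trans h3 rr').
  - move=> l m m' r _ m'm [w1 w10 f1] [w2 w20 f2]; exists (Num.min w1 w2).
      by rewrite lt_min w10 w20.
    apply: (sub_finite_set (B := (A `&` [set c | `|complex.Re c - x| < w1 /\
      l <= complex.Im c <= m]) `|` (A `&` [set c | `|complex.Re c - x| < w2 /\
      m' <= complex.Im c <= r]))); last by rewrite finite_setU.
    move=> c [Ac [h1 /andP[h2 h3]]]; move: h1; rewrite lt_min => /andP[h1 h1'].
    have [cm|mc] := lerP (complex.Im c) m; [left|right]; split => //; split => //.
      by rewrite h2 cm.
    by rewrite h3 (le_trans m'm) ?ltW.
  - move=> y _; have [e e0 fe] := loc (x +i* y); exists (e / 2).
      by rewrite divr_gt0.
    exists (e / 2); first by rewrite divr_gt0.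
    apply: sub_finite_set fe => c [Ac [h1 h2]]; split => //=.
    apply: (le_lt_trans (cmod_sub_le _ _)) => /=.
    rewrite -ler_distl in h2.
    by rewrite [e]splitr ltr_leD.
have step2 : finite_set (A `&` [set c | - N <= complex.Re c <= N /\
    - N <= complex.Im c <= N]).
  pose Q l r := finite_set (A `&` [set c | l <= complex.Re c <= r /\
    - N <= complex.Im c <= N]).
  apply: (@cover1D R Q); first exact: NN.
  - move=> l r l' r' fw ll' rr'.
    apply: sub_finite_set fw => c [Ac [/andP[h2 h3] h4]]; split => //; split => //.
    by rewrite (le_trans ll' h2) (le_trans h3 rr').
  - move=> l m m' r _ m'm f1 f2.
    apply: (sub_finite_set (B := (A `&` [set c | l <= complex.Re c <= m /\
      - N <= complex.Im c <= N]) `|` (A `&` [set c | m' <= complex.Re c <= r /\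
      - N <= complex.Im c <= N]))); last by rewrite finite_setU.
    move=> c [Ac [/andP[h2 h3] h4]].
    have [cm|mc] := lerP (complex.Re c) m; [left|right]; split => //; split => //.
      by rewrite h2 cm.
    by rewrite h3 (le_trans m'm) ?ltW.
  - move=> x _; have [w w0 fw] := step1 x; exists (w / 2).
      by rewrite divr_gt0.
    apply: sub_finite_set fw => c [Ac [h1 h2]]; split => //; split => //.
    rewrite -ler_distl in h1; apply: (le_lt_trans h1).
    by rewrite ltr_pdivrMr // ltr_pMr // ltr1n.
apply: sub_finite_set step2 => c [Ac cn]; split => //.
have hR := le_trans (Re_le c) (le_trans cn (ler_norm n)).
have hI := le_trans (Im_le c) (le_trans cn (ler_norm n)).
by move: hR hI; rewrite !ler_norml.
Qed.
End Compact.

Section Geo.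
Local Open Scope complex_scope.
Variable R : realType.
Local Notation C := R[i].
Variable Sig : set (sector R).
Local Notation Z := (Sdual Sig).

Lemma ReMJ (z w : C) : complex.Re (z * w^*) =
  complex.Re z * complex.Re w + complex.Im z * complex.Im w.
Proof. by case: z w => x y [u v] /=; rewrite mulrN opprK. Qed.

Lemma ReD (z w : C) : complex.Re (z + w) = complex.Re z + complex.Re w.
Proof. by case: z w => x y [u v]. Qed.
Lemma ImD (z w : C) : complex.Im (z + w) = complex.Im z + complex.Im w.
Proof. by case: z w => x y [u v]. Qed.
Lemma ReN (z : C) : complex.Re (- z) = - complex.Re z.
Proof. by case: z. Qed.
Lemma ImN (z : C) : complex.Im (- z) = - complex.Im z.
Proof. by case: z. Qed.
Lemma ReB (z w : C) : complex.Re (z - w) = complex.Re z - complex.Re w.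
Proof. by rewrite ReD ReN. Qed.
Lemma ImB (z w : C) : complex.Im (z - w) = complex.Im z - complex.Im w.
Proof. by rewrite ImD ImN. Qed.

Lemma cmodJ (w : C) : cmod (w^*) = cmod w.
Proof. by case: w => u v; rewrite /cmod /= sqrrN. Qed.

Lemma ReMJ_le (z w : C) : complex.Re (z * w^*) <= cmod z * cmod w.
Proof.
rewrite -(cmodJ w) -cmodM; exact: le_trans (ler_norm _) (Re_le _).
Qed.

Lemma Z0 : Z 0.
Proof. by move=> b _; rewrite mul0r. Qed.

Lemma ZD a b : Z a -> Z b -> Z (a + b).
Proof.
move=> Za Zb c Cc; rewrite ReMJ ReD ImD mulrDl mulrDl addrACA -!ReMJ.
by rewrite addr_ge0 ?Za ?Zb.
Qed.

Lemma ZM (r : R) a : 0 <= r -> Z a -> Z (r%:C * a).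
Proof.
move=> r0 Za c Cc; rewrite ReMJ.
have -> : complex.Re (r%:C * a) = r * complex.Re a by case: a {Za} => x y /=; rewrite mul0r subr0.
have -> : complex.Im (r%:C * a) = r * complex.Im a by case: a {Za} => x y /=; rewrite mul0r addr0.
by rewrite -!mulrA -mulrDr -ReMJ mulr_ge0 ?Za.
Qed.

Lemma Zclosed a : ~ Z a ->
  exists2 e, 0 < e & forall a', cmod (a' - a) < e -> ~ Z a'.
Proof.
move=> /existsNP [b /not_implyP [Cb]] /negP; rewrite -ltNge => hb.
exists (- complex.Re (a * b^*) / (cmod b + 1)).
  by rewrite divr_gt0 ?oppr_gt0 // ltr_wpDl ?cmod_ge0.
move=> a' ha Za'; have := Za' b Cb.
have -> : a' = a + (a' - a) by rewrite addrC subrK.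
rewrite mulrDl ReD; apply/negP; rewrite -ltNge.
rewrite -ltrBrDl sub0r; apply: (le_lt_trans (ReMJ_le _ _)).
rewrite ltr_pdivlMr ?ltr_wpDl ?cmod_ge0 // in ha.
apply: le_lt_trans ha; rewrite ler_wpM2l ?cmod_ge0 //.
by rewrite lerDl.
Qed.


Lemma cmod_cossin (th : R) : cmod (cos th +i* sin th) = 1.
Proof. by rewrite /cmod /= cos2Dsin2 sqrtr1. Qed.

Lemma cone_dir (s : sector R) th : Sig s -> sector_ok s ->
  sec_th1 s < th < sec_th2 s -> Cone Sig (cos th +i* sin th).
Proof.
move=> Ss [e0 _] hth; exists (sec_eps s / 2); split; first by rewrite divr_gt0.
exists s; split => //.
have hc : cmod ((sec_eps s / 2)%:C * (cos th +i* sin th)) = sec_eps s / 2.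
  by rewrite cmodM cmod_cossin mulr1 cmodR ger0_norm // divr_ge0 // ltW.
split; first by rewrite hc divr_gt0 //= ltr_pdivrMr // ltr_pMr // ltr1n.
exists th; split => //; rewrite hc /=.
apply/eqP; rewrite eq_complex /= !mul0r subr0 addr0 !eqxx //.
Qed.

Lemma Zbound : sectoroid Sig -> exists2 M, 0 <= M &
  forall z p, Z z -> Z (p - z) -> cmod z <= M * cmod p.
Proof.
move=> [[s Ss] okS]; have [e0 t12] := okS s Ss.
set t1 := sec_th1 s in t12 *; set t2 := sec_th2 s in t12 *.
set d := Num.min ((t2 - t1) / 3%:R) 1.
have d0 : 0 < d by rewrite lt_min ltr01 divr_gt0 // subr_gt0.
have d1 : d <= 1 by rewrite ge_min lexx orbT.
have d3 : d <= (t2 - t1) / 3%:R by rewrite ge_min lexx.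
set th1 := t1 + d; set th2 := t1 + d + d.
have C1 := cone_dir (th := th1) Ss (okS s Ss).
have C2 := cone_dir (th := th2) Ss (okS s Ss).
have h1 : t1 < th1 < t2 by apply/andP; rewrite /th1; split; lra.
have h2 : t1 < th2 < t2 by apply/andP; rewrite /th2; split; lra.
have {}C1 := C1 h1; have {}C2 := C2 h2.
set D := cos th1 * sin th2 - cos th2 * sin th1.
have DE : D = sin d.
  have -> : d = th2 - th1 by rewrite /th2 /th1; ring.
  by rewrite sinB /D mulrC.
have D0 : 0 < D.
  rewrite DE sin_gt0_pi // d0 /= (le_lt_trans d1) //.
  by rewrite (lt_le_trans _ (@pi_ge2 R)) // ltr1n.
exists (4%:R / D); first by rewrite divr_ge0 // ltW.
move=> z p Zz Zpz.
have hu (th : R) : Cone Sig (cos th +i* sin th) ->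
  0 <= complex.Re (z * (cos th +i* sin th)^*) <= cmod p.
  move=> Cb; have hz := Zz _ Cb.
  have hh : 0 <= complex.Re (p - z) * cos th + complex.Im (p - z) * sin th.
    have := Zpz _ Cb; move: (p - z) => q hq.
    by have := ReMJ q (cos th +i* sin th); move=> <-.
  rewrite ReB ImB in hh.
  have hp := ReMJ_le p (cos th +i* sin th).
  rewrite cmod_cossin mulr1 in hp.
  rewrite !ReMJ ?ReB ?ImB in hh hz hp *.
  rewrite /= in hz hp *; apply/andP; split; lra.
have := hu _ C1; have := hu _ C2; rewrite !ReMJ /=.
move=> /andP[u20 u2p] /andP[u10 u1p].
set x := complex.Re z in u20 u2p u10 u1p *; set y := complex.Im z in u20 u2p u10 u1p *.
have cp0 := cmod_ge0 p.
have lu (u c : R) : 0 <= u <= cmod p -> `|c| <= 1 -> `|u * c| <= cmod p.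
  move=> /andP[u0 up] c1; rewrite normrM ger0_norm //.
  by rewrite -[X in _ <= X]mulr1 ler_pM.
have hx : `|x| * D <= cmod p + cmod p.
  have ex : x * D = (x * cos th1 + y * sin th1) * sin th2 -
      (x * cos th2 + y * sin th2) * sin th1 by rewrite /D; ring.
  rewrite -(ger0_norm (ltW D0)) -normrM ex; apply: le_trans (ler_normB _ _) _.
  by rewrite lerD // lu ?u10 ?u1p ?u20 ?u2p ?sin_max.
have hy : `|y| * D <= cmod p + cmod p.
  have ey : y * D = cos th1 * (x * cos th2 + y * sin th2) -
      cos th2 * (x * cos th1 + y * sin th1) by rewrite /D; ring.
  rewrite -(ger0_norm (ltW D0)) -normrM ey; apply: le_trans (ler_normB _ _) _.
  by rewrite ![cos _ * _]mulrC lerD // lu ?u10 ?u1p ?u20 ?u2p ?cos_max.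
have : `|x| + `|y| <= (4%:R * cmod p) / D.
  rewrite ler_pdivlMr // mulrDl; lra.
move=> h; apply: (le_trans (cmod_le_ReIm z)); apply: (le_trans h).
by rewrite mulrAC.
Qed.

End Geo.

Section Sheaf.
Local Open Scope complex_scope.
Variable R : realType.
Local Notation C := R[i].
Variable Sig : set (sector R).
Local Notation Z := (Sdual Sig).

Lemma min_radius (L : seq C) (Q : C -> R -> Prop) :
  (forall c r r', Q c r -> 0 < r' -> r' <= r -> Q c r') ->
  (forall c, c \in L -> exists2 r, 0 < r & Q c r) ->
  exists2 rho, 0 < rho & forall c, c \in L -> Q c rho.
Proof.
move=> mono; elim: L => [|c L IH] h; first by exists 1.
have [r r0 Qr] := h c (mem_head _ _).
have [rho rho0 Qrho] := IH (fun x xL => h x (ltac:(by rewrite in_cons xL orbT))).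
exists (Num.min r rho); first by rewrite lt_min r0 rho0.
move=> x; rewrite in_cons => /orP[/eqP->|xL].
  by apply: mono Qr _ _; rewrite ?lt_min ?r0 ?rho0 // ge_min lexx.
by apply: mono (Qrho x xL) _ _; rewrite ?lt_min ?r0 ?rho0 // ge_min lexx orbT.
Qed.

Lemma openT : is_openC (@setT C).
Proof. by move=> z _; exists 1; split. Qed.
Definition Uall := Opens openT.

Lemma ball_open (t : C) rho : is_openC [set z | cmod (z - t) < rho].
Proof.
move=> z /= hz; exists (rho - cmod (z - t)); split; first by rewrite subr_gt0.
move=> w hw; have := cmodD (w - z) (z - t); rewrite addrA subrK => h.
apply: (le_lt_trans h); by rewrite -ltrBrDr.
Qed.

Lemma Zc_open : is_openC (~` Z).
Proof.
move=> z nZ; have [e e0 he] := Zclosed nZ; exists e; split => //.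
Qed.

Definition tk (k c0 : C) : C -> C -> C :=
  fun t c => if (c == c0) && `[< Z (t - c0) >] then k else 0.

Lemma tk_sec k c0 : is_section Sig setT (tk k c0).
Proof.
split.
- move=> t c; rewrite /tk; case: ifP => [/andP[/eqP -> /asboolP hZ] _|].
    by split.
  by rewrite eqxx.
- move=> t c _ Ztc; exists 1; split => // t' _ Zt'c; rewrite /tk.
  case: (c =P c0) => [E|] //=; subst c0.
  by rewrite !asboolT.
- move=> t _; exists 1; split => //; apply: sub_finite_set (finite_set1 c0).
  move=> c [t' [_]]; rewrite /tk; case: (c =P c0) => [E|] //=.
  by rewrite eqxx.
Qed.
Definition tks k c0 : section Sig Uall := @Section_ R Sig Uall (tk k c0) (tk_sec k c0).

Lemma zero_sec (U : opens R) : is_section Sig (oset U) (fun _ _ => 0).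
Proof.
split.
- by move=> t c; rewrite eqxx.
- by move=> t c _ _; exists 1; split.
move=> t _; exists 1; split => //; apply: sub_finite_set (@finite_set0 C).
by move=> c [t' [_]]; rewrite eqxx.
Qed.
Definition secz U : section Sig U := Section_ (zero_sec U).

Definition restr (U : opens R) (s : section Sig U) (V : opens R) (P : set C) :=
  fun t c => if `[< oset V t /\ P c >] then s t c else 0.

Lemma restr_sec (U V : opens R) (s : section Sig U) P :
  oset V `<=` oset U -> is_section Sig (oset V) (restr s V P).
Proof.
move=> VU; case: (sfunP s) => h1 h2 h3; split.
- move=> t c; rewrite /restr; case: asboolP => [[Vt Pc] /h1 [] //|]; by rewrite eqxx.
- move=> t c Vt Ztc; rewrite /restr; case: (asboolP (oset V t /\ P c)); last first.
    move=> nP; exists 1; split => // t' _ _; case: asboolP => [[_ Pc]|//].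
    by case: nP.
  move=> [_ Pc]; have [e [e0 he]] := h2 t c (VU _ Vt) Ztc.
  have [e' [e'0 he']] := oset_open Vt.
  exists (Num.min e e'); split; first by rewrite lt_min e0 e'0.
  move=> t' ht' Zt'c; rewrite lt_min in ht'; case/andP: ht' => ht1 ht2.
  case: asboolP => [_|[]]; first exact: he.
  by split => //; apply: he'.
- move=> t Vt; have [e [e0 he]] := h3 t (VU _ Vt); exists e; split => //.
  apply: sub_finite_set he => c [t' [ht']]; rewrite /restr.
  by case: asboolP => [_ ?|]; [exists t' | rewrite eqxx].
Qed.

Definition restrs (U V : opens R) (s : section Sig U) P (VU : oset V `<=` oset U)
  : section Sig V := Section_ (restr_sec s P VU).


Lemma sec_fin (U : opens R) (s : section Sig U) t :
  exists G : {fset C}, forall c, s t c != 0 -> c \in G.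
Proof.
case: (sfunP s) => hs1 _ hs3.
have [Ut|nUt] := pselect (oset U t); last first.
  by exists fset0 => c /hs1 [].
have [e1 [e10 fin1]] := hs3 t Ut.
have [G GE] := finite_fsetP.1 fin1.
exists G => c sne; have : [set` G] c by rewrite -GE; exists t; rewrite subrr cmod0.
done.
Qed.

Section Endo.
Local Open Scope complex_scope.
Unset Implicit Arguments.
Variable phi : endo Sig.
Set Implicit Arguments.
Hypothesis Hphi : is_equiv_endo phi.

Lemma phi_sec (U : opens R) (s : section Sig U) (t c : C) : phi U s t c != 0 -> oset U t /\ Z (t - c).
Proof. by case: (sfunP (phi U s)) => h1 _ _; apply: h1. Qed.

Lemma phi_lin U (s1 s2 s3 : section Sig U) k :
  (forall t c, s3 t c = k * s1 t c + s2 t c) ->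
  forall t c, phi U s3 t c = k * phi U s1 t c + phi U s2 t c.
Proof. by case: Hphi => h _ _; apply: h. Qed.

Lemma phi_ext U (s1 s2 : section Sig U) : (forall t c, s1 t c = s2 t c) ->
  forall t c, phi U s1 t c = phi U s2 t c.
Proof.
move=> e t c; rewrite (@phi_lin U s2 s2 s1 0) ?mul0r ?add0r // => t' c'.
by rewrite mul0r add0r.
Qed.

Lemma phi_zero U (s : section Sig U) : (forall t c, s t c = 0) ->
  forall t c, phi U s t c = 0.
Proof.
move=> e t c; have := @phi_lin U s s s 1 (fun t c => ltac:(by rewrite !e mulr0 addr0)) t c.
rewrite mul1r => h; have := congr1 (fun y => y - phi U s t c) h.
by rewrite subrr addrK => /esym.
Qed.

Lemma phi_restr (U V : opens R) (s : section Sig U) (s' : section Sig V) :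
  oset V `<=` oset U -> (forall t c, oset V t -> s' t c = s t c) ->
  forall t c, oset V t -> phi V s' t c = phi U s t c.
Proof. move=> VU E t c Vt; case: Hphi => _ h _; exact: (h U V VU s s' E t c Vt). Qed.

Lemma phi_transl a (U U' : opens R) : (forall t, oset U' (t + a) <-> oset U t) ->
  forall (s : section Sig U') (s' : section Sig U),
  (forall t c, s' t c = s (t + a) (c + a)) ->
  forall t c, phi U s' t c = phi U' s (t + a) (c + a).
Proof. move=> HU s s' E t c; case: Hphi => _ _ h; exact: (h a U U' HU s s' E t c). Qed.

Definition g t e := phi Uall (tks 1 0) t e.

Lemma phi_tk k c t e : phi Uall (tks k c) t e = k * g (t - c) (e - c).
Proof.
have -> : phi Uall (tks k c) t e = phi Uall (tks k 0) (t - c) (e - c).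
  rewrite (@phi_transl c Uall Uall _ (tks k c) (tks k 0)) ?subrK // => t' c'.
  rewrite /= /tk subr0 addrK.
  by have -> : (c' + c == c) = (c' == 0) by rewrite -subr_eq0 addrK.
rewrite /g (@phi_lin Uall (tks 1 0) (secz Uall) (tks k 0) k) ?(@phi_zero Uall (secz Uall)) ?addr0 //.
by move=> t' c'; rewrite /= /tk; case: ifP; rewrite ?mulr1 ?mulr0 addr0.
Qed.

Lemma g_supp t e : g t e != 0 -> Z (t - e).
Proof. by case/phi_sec. Qed.

Lemma g_suppZ t e : g t e != 0 -> Z t.
Proof.
move=> gne; apply: contrapT => nZ; move: gne; apply/negP; rewrite negbK.
pose V := Opens Zc_open.
rewrite /g -(@phi_restr Uall V (tks 1 0) (secz V)) //.
- by rewrite (@phi_zero V (secz V)).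
- by move=> t' c' Vt'; rewrite /= /tk subr0 asboolF // andbF.
Qed.


Lemma g_const t e : Z (t - e) -> g t e = g e e.
Proof.
move=> Zw; set w := t - e.
pose h (x : R) := g (e + x%:C * w) e.
pose P (l r : R) := forall y z, 0 <= y <= 1 -> 0 <= z <= 1 ->
  l <= y <= r -> l <= z <= r -> h y = h z.
suff : P 0 1.
  move=> /(_ 1 0); rewrite /h mul1r mul0r addr0 /w addrC subrK; apply => //.
  - by rewrite ler01 lexx.
  - by rewrite lexx ler01.
  - by rewrite ler01 lexx.
  - by rewrite lexx ler01.
apply: (@cover1D R P); first exact: ler01.
- move=> l r l' r' Plr ll' rr' y z hy hz /andP[ly yr] /andP[lz zr].
  apply: Plr => //; apply/andP; split; by [apply: le_trans ll' _|apply: le_trans _ rr'].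
- move=> l m m' r hm m'm Plm Pm'r.
  have key y : 0 <= y <= 1 -> l <= y <= r -> h y = h m.
    move=> hy /andP[ly yr]; have [ym|my] := lerP y m.
      by apply: Plm; rewrite ?hm ?ly ?ym ?lexx ?(le_trans ly ym).
    by apply: Pm'r; rewrite ?hm ?yr ?(le_trans m'm (ltW my)) ?lexx ?(le_trans (ltW my) yr) ?m'm.
  by move=> y z hy hz ly lz; rewrite (key y) ?(key z).
- move=> x hx; case/andP: (hx) => x0 x1.
  set t0 := e + x%:C * w.
  have Zt0 : Z (t0 - e) by rewrite /t0 addrC addKr; apply: ZM.
  case: (sfunP (phi Uall (tks 1 0))) => _ hloc _.
  have [r [r0 hr]] := hloc t0 e I Zt0.
  set d := r / (cmod w + 1).
  have cw0 : 0 < cmod w + 1 by rewrite ltr_wpDl ?cmod_ge0.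
  have d0 : 0 < d by rewrite divr_gt0.
  exists d => // y z hy hz.
  have key y' : 0 <= y' <= 1 -> x - d <= y' <= x + d -> h y' = h x.
    move=> /andP[y0 _] hyd; rewrite /h /g hr -/t0 //.
      rewrite (_ : e + y'%:C * w - t0 = (y' - x)%:C * w); last first.
        by rewrite /t0 rmorphB /=; ring.
      rewrite cmodM cmodR; apply: (le_lt_trans (y := d * cmod w)).
        by apply: ler_wpM2r; [exact: cmod_ge0 | rewrite ler_distl].
      by rewrite /d mulrAC ltr_pdivrMr // ltr_pM2l // ltrDl.
    by rewrite addrC addKr; apply: ZM.
  by move=> hyd hzd; rewrite (key y) ?(key z).
Qed.

Lemma gE t e : g t e = if `[< Z (t - e) >] then g e e else 0.
Proof.
case: asboolP => [/g_const //|nZ]; apply/eqP; apply: contraT => /g_supp.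
by move/nZ.
Qed.

Lemma a_supp e : g e e != 0 -> Z e.
Proof. exact: g_suppZ. Qed.


Lemma reprF (U : opens R) (s : section Sig U) t e :
  phi U s t e = \sum_(c \in [set: C]) s t c * g (t - c) (e - c).
Proof.
case: (sfunP s) => hs1 hs2 hs3.
have [Ut|nUt] := pselect (oset U t); last first.
  rewrite fsbig1; last first.
    move=> c _; have [->|/hs1 [] //] := eqVneq (s t c) 0; by rewrite mul0r.
  by apply/eqP; apply: contraT => /phi_sec [].
have [e1 [e10 fin1]] := hs3 t Ut.
have [Fs FE] := finite_fsetP.1 fin1.
have inF t' c : cmod (t' - t) < e1 -> s t' c != 0 -> c \in Fs.
  by move=> ht' sne; have : [set` Fs] c by rewrite -FE; exists t'.
have [rU [rU0 hrU]] := oset_open Ut.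
pose Q c r := forall t', cmod (t' - t) < r -> s t' c = tk (s t c) c t' c.
have hQ c : exists2 r, 0 < r & Q c r.
  case: (pselect (Z (t - c))) => Ztc.
  - have [r [r0 hr]] := hs2 t c Ut Ztc; exists r => // t' ht'.
    rewrite /tk eqxx /=; case: asboolP => [Z'|nZ']; first exact: hr.
    by apply/eqP; apply: contraT => /hs1 [_ /nZ'].
  - have [r r0 hr] := Zclosed Ztc; exists r => // t' ht'.
    have st0 : s t c = 0 by apply/eqP; apply: contraT => /hs1 [_ /Ztc].
    have st'0 : s t' c = 0.
      apply/eqP; apply: contraT => /hs1 [_ Z']; exfalso; apply: (hr (t' - c) _ Z').
      by rewrite opprB addrA subrK.
    by rewrite st0 st'0 /tk; case: ifP.
have [rho rho0 hrho] := @min_radius Fs Q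
  (fun c r r' Qr r'0 r'r t' ht' => Qr t' (lt_le_trans ht' r'r))
  (fun c _ => hQ c).
set r0 := Num.min rho (Num.min e1 rU).
have r00 : 0 < r0 by rewrite !lt_min rho0 e10 rU0.
pose V := Opens (@ball_open t r0).
have VU : oset V `<=` oset U.
  move=> z /= hz; apply: hrU; apply: lt_le_trans hz _.
  by rewrite /r0 !ge_min lexx !orbT.
have Vt : oset V t by rewrite /= subrr cmod0.
have Vrho t' : oset V t' -> cmod (t' - t) < rho.
  by move=> /= h; apply: lt_le_trans h _; rewrite /r0 ge_min lexx.
have Ve1 t' : oset V t' -> cmod (t' - t) < e1.
  by move=> /= h; apply: lt_le_trans h _; rewrite /r0 !ge_min lexx !orbT.
have claim : forall L : seq C, uniq L -> {subset L <= Fs} ->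
    phi V (restrs s [set c | c \in L] VU) t e =
    \sum_(c <- L) s t c * g (t - c) (e - c).
  elim=> [|c L IH].
    move=> _ _; rewrite big_nil (@phi_zero V) // => t' c'.
    by rewrite /= /restr; case: asboolP => // -[].
  rewrite cons_uniq => /andP[cL uL] sub.
  rewrite big_cons -IH //; last by move=> x xL; apply: sub; rewrite in_cons xL orbT.
  rewrite (@phi_lin V (restrs s [set c' | c' \in [:: c]] VU)
     (restrs s [set c' | c' \in L] VU) (restrs s [set c' | c' \in c :: L] VU) 1); last first.
    move=> t' c'; rewrite /= /restr mul1r.
    case: (pselect (oset V t')) => Vt'; last first.
      by do 3 (case: asboolP => [[]|_] //); rewrite addr0.
    have [->|ne] := eqVneq c' c.
      rewrite (@asboolT (oset V t' /\ [set` c :: L] c)); last by split => //; rewrite /= mem_head.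
      rewrite (@asboolT (oset V t' /\ [set` [:: c]] c)); last by split => //; rewrite /= mem_head.
      rewrite asboolF ?addr0 // => -[_ cL'].
      by rewrite /= cL' in cL.
    rewrite (asboolF (P := oset V t' /\ c' \in [:: c])); last first.
      by case=> _; rewrite /= inE (negbTE ne).
    rewrite add0r; congr (if _ then _ else _); apply/asboolP/asboolP.
      by case=> _; rewrite /= in_cons (negbTE ne).
    by case=> _ h; split => //; rewrite /= in_cons (negbTE ne).
  congr (_ + _); rewrite mul1r.
  rewrite (@phi_restr Uall V (tks (s t c) c)) //; first exact: phi_tk.
  move=> t' c' Vt'; rewrite /= /restr.
  have [->|ne] := eqVneq c' c.
    rewrite (@asboolT (oset V t' /\ [set` [:: c]] c)); last by split => //; rewrite /= mem_head.
    apply: hrho; [by apply: sub; rewrite mem_head | exact: Vrho].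
  rewrite asboolF; last by case=> _; rewrite /= inE (negbTE ne).
  by rewrite /tk (negbTE ne).
rewrite -(@phi_restr U V s (restrs s [set c | c \in Fs] VU)) //.
- rewrite claim ?fset_uniq //; apply/esym/fsbigTE => c cF.
  have -> : s t c = 0.
    by apply/eqP; apply: contraT => /(inF t c); rewrite subrr cmod0 (negbTE cF) => /(_ e10).
  by rewrite mul0r.
- move=> t' c' Vt'; rewrite /= /restr.
  case: asboolP => [//|h]; apply/esym/eqP; apply: contraT => /(inF t' c' (Ve1 _ Vt')).
  by move=> hc; case: h.
Qed.

End Endo.

End Sheaf.

Section Conv.
Local Open Scope complex_scope.
Variable R : realType.
Local Notation C := R[i].
Variable Sig : set (sector R).
Local Notation Z := (Sdual Sig).
Hypothesis HS : sectoroid Sig.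

Lemma sum_shift (f : C -> C) (U : opens R) (s : section Sig U) t e (G : {fset C}) :
  (forall c, s t c != 0 -> c \in G) ->
  \sum_(c \in [set: C]) f c * s t (e - c) = \sum_(c <- G) f (e - c) * s t c.
Proof.
move=> hG; rewrite (reindex_fsbigT (fun c => e - c)); last first.
  by exists (fun c => e - c) => c; exact: subKr.
under eq_fsbigr do rewrite subKr.
apply: fsbigTE => c cG; have -> : s t c = 0.
  by apply/eqP; apply: contraT => /hG; rewrite (negbTE cG).
by rewrite mulr0.
Qed.

Lemma fsum_neq0 (P : set C) (F : C -> C) :
  \sum_(i \in P) F i != 0 -> exists2 i, P i & F i != 0.
Proof.
move=> h; apply: contrapT => nex; move: h; rewrite fsbig1 ?eqxx // => i Pi.
by apply/eqP; apply: contraT => Fi; exfalso; apply: nex; exists i.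
Qed.

Variable f : C -> C.
Hypothesis Hf : Lambda0 Sig f.

Definition convf (U : opens R) (s : section Sig U) : C -> C -> C :=
  fun t e => if `[< Z (t - e) >] then \sum_(c \in [set: C]) f c * s t (e - c) else 0.

Lemma convf_sec (U : opens R) (s : section Sig U) : is_section Sig (oset U) (convf s).
Proof.
case: Hf => fsupp ffin.
case: (sfunP s) => hs1 hs2 hs3; split.
- move=> t e; rewrite /convf; case: asboolP => [Zte|]; last by rewrite eqxx.
  move/fsum_neq0 => [c _]; have [->|sne] := eqVneq (s t (e - c)) 0; first by rewrite mulr0 eqxx.
  by move=> _; have [Ut _] := hs1 _ _ sne.
- move=> t e Ut Zte.
  have [e1 [e10 fin1]] := hs3 t Ut.
  have [Fs FE] := finite_fsetP.1 fin1.
  have inF t' c : cmod (t' - t) < e1 -> s t' c != 0 -> c \in Fs.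
    by move=> ht' sne; have : [set` Fs] c by rewrite -FE; exists t'.
  pose Q c r := forall t', cmod (t' - t) < r -> Z (t' - e) ->
    f (e - c) * s t' c = f (e - c) * s t c.
  have hQ c : exists2 r, 0 < r & Q c r.
    have [f0|fne] := eqVneq (f (e - c)) 0.
      by exists 1 => // t' _ _; rewrite f0 !mul0r.
    have Zec := fsupp _ fne.
    have Ztc : Z (t - c) by have := ZD Zte Zec; rewrite addrA subrK.
    have [r [r0 hr]] := hs2 t c Ut Ztc; exists r => // t' ht' Zt'e.
    rewrite hr //; by have := ZD Zt'e Zec; rewrite addrA subrK.
  have [rho rho0 hrho] := @min_radius R Fs Q
    (fun c r r' Qr r'0 r'r t' ht' => Qr t' (lt_le_trans ht' r'r))
    (fun c _ => hQ c).
  exists (Num.min rho e1); split; first by rewrite lt_min rho0 e10.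
  move=> t' ht' Zt'e; rewrite lt_min in ht'; case/andP: ht' => h1 h2.
  rewrite /convf !asboolT //.
  rewrite (sum_shift _ _ _ (G := Fs)); last by move=> c; apply: inF.
  rewrite [RHS](sum_shift _ _ _ (G := Fs)); last first.
    by move=> c; apply: inF; rewrite subrr cmod0.
  by rewrite big_seq [RHS]big_seq; apply: eq_bigr => c cF; apply: hrho.
- move=> t Ut.
  have [e1 [e10 fin1]] := hs3 t Ut.
  have [Fs FE] := finite_fsetP.1 fin1.
  have inF t' c : cmod (t' - t) < e1 -> s t' c != 0 -> c \in Fs.
    by move=> ht' sne; have : [set` Fs] c by rewrite -FE; exists t'.
  have [M M0 hM] := Zbound HS.
  set B := M * (cmod t + e1 + \sum_(x <- Fs) cmod x).
  exists e1; split => //.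
  apply: (sub_finite_set (B := [set x + y | x in [set c | cmod c <= B /\ f c != 0] & y in [set` Fs]])).
    move=> e [t' [ht' cne]]; move: cne; rewrite /convf.
    case: asboolP => [Zt'e|]; last by rewrite eqxx.
    move/fsum_neq0 => [c _]; have [->|sne] := eqVneq (s t' (e - c)) 0; first by rewrite mulr0 eqxx.
    have [->|fne] := eqVneq (f c) 0; first by rewrite mul0r eqxx.
    move=> _; have c'F := inF _ _ ht' sne.
    exists c; last by exists (e - c) => //; rewrite addrC subrK.
    split => //; apply: le_trans (hM c (t' - (e - c)) (fsupp _ fne) _) _.
      by have -> : t' - (e - c) - c = t' - e by ring.
    rewrite /B ler_wpM2l //.
    have h1 : cmod (t' - (e - c)) <= cmod (t' - t) + cmod t + cmod (e - c).
      have -> : t' - (e - c) = (t' - t) + t + (- (e - c)) by ring.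
      apply: le_trans (cmodD _ _) _; rewrite cmodN lerD2r; exact: cmodD.
    have h2 : cmod (e - c) <= \sum_(x <- Fs) cmod x.
      rewrite (bigD1_seq (e - c)) ?fset_uniq //=; apply: ler_wpDr => //.
      by apply: sumr_ge0 => i _; exact: cmod_ge0.
    have h3 := ltW ht'; lra.
  apply: (@finite_image2 _ _ _ _ _ (fun x y => x + y)); last exact: finite_fset.
  by apply: sub_finite_set (ffin B) => c [].
Qed.

Definition convfs (U : opens R) (s : section Sig U) : section Sig U :=
  @Section_ R Sig U (convf s) (convf_sec s).

Definition phif : endo Sig := fun U s => convfs s.

Lemma phif_equiv : is_equiv_endo phif.
Proof.
split.
- move=> U s1 s2 s3 k E t e; rewrite /= /convf.
  case: asboolP => _; last by rewrite mulr0 addr0.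
  have [G1 h1] := sec_fin s1 t; have [G2 h2] := sec_fin s2 t.
  have hG1 c : s1 t c != 0 -> c \in (G1 `|` G2)%fset by move/h1; rewrite inE => ->.
  have hG2 c : s2 t c != 0 -> c \in (G1 `|` G2)%fset by move/h2; rewrite inE orbC => ->.
  have hG3 c : s3 t c != 0 -> c \in (G1 `|` G2)%fset.
    rewrite E; have [/eqP s10|/hG1 //] := boolP (s1 t c == 0).
    by rewrite s10 mulr0 add0r => /hG2.
  rewrite (sum_shift _ _ _ (G := (G1 `|` G2)%fset)) //.
  rewrite (sum_shift _ _ _ (G := (G1 `|` G2)%fset)) //.
  rewrite (sum_shift _ _ _ (G := (G1 `|` G2)%fset)) //.
  rewrite mulr_sumr -big_split /=; apply: eq_bigr => c _.
  by rewrite E; ring.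
- move=> U V VU s s' E t e Vt; rewrite /= /convf.
  case: asboolP => // _; apply: eq_fsbigr => c _; by rewrite E.
- move=> a U U' HU s s' E t e; rewrite /= /convf.
  have -> : t + a - (e + a) = t - e by ring.
  case: asboolP => // _; apply: eq_fsbigr => c _; rewrite E.
  by have -> : e - c + a = e + a - c by ring.
Qed.

Lemma phif_val e : phif (tks Sig 1 0) e e = f e.
Proof.
rewrite /= /convf subrr asboolT; last exact: Z0.
rewrite (sum_shift _ _ _ (G := [fset 0]%fset)); last first.
  move=> c; rewrite /= /tk; case: (c =P 0) => [E|] //=; last by rewrite eqxx.
  by rewrite E inE.
rewrite big_seq_fset1 subr0 /= /tk eqxx /= subr0.
case: asboolP => Ze; first by rewrite mulr1.
rewrite mulr0; apply/esym/eqP; apply: contraT => /(proj1 Hf).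
by move/Ze.
Qed.

End Conv.


Unset Implicit Arguments.
Unset Strict Implicit.

Lemma monom_L0 (R : realType) (Sig : set (sector R)) d : Sdual Sig d -> Lambda0 Sig (monom d).
Proof.
move=> Zd; split.
- move=> c; rewrite /monom; case: (c =P d) => [E|]; [by rewrite E | by rewrite eqxx].
- move=> n; apply: sub_finite_set (finite_set1 d) => c [_].
  by rewrite /monom; case: (c =P d) => [E|]; [by [] | by rewrite eqxx].
Qed.

Theorem mainTheorem9 (R : realType) (Sig : set (sector R)) :
  sectoroid Sig ->
  exists Phi : endo Sig -> (R[i] -> R[i]),
    (forall phi, is_equiv_endo phi -> Lambda0 Sig (Phi phi)) /\
        (forall phi psi, is_equiv_endo phi -> is_equiv_endo psi ->
           Phi phi = Phi psi -> endo_eq phi psi) /\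
        (forall f, Lambda0 Sig f -> exists phi, is_equiv_endo phi /\ Phi phi = f) /\
        (forall phi psi chi, is_equiv_endo phi -> is_equiv_endo psi ->
           is_equiv_endo chi ->
           (forall U s t c, chi U s t c = phi U s t c + psi U s t c) ->
           Phi chi = (fun e => Phi phi e + Phi psi e)) /\
        (forall phi psi, is_equiv_endo phi -> is_equiv_endo psi ->
           Phi (fun U s => phi U (psi U s)) = lam_conv (Phi phi) (Phi psi)) /\
        Phi (fun U s => s) = monom 0 /\
        (forall d, Sdual Sig d ->
           (exists phi, is_equiv_endo phi /\ shift_morph (Sig:=Sig) d phi) /\
           (forall phi, is_equiv_endo phi -> shift_morph (Sig:=Sig) d phi ->
              Phi phi = monom d)).
Proof.
move=> HS.
exists (fun (phi : endo Sig) (e : R[i]) => phi (Uall R) (tks Sig 1 0) e e).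
split; [|split; [|split; [|split; [|split; [|split]]]]].
- move=> phi Hphi; split.
    by move=> c; apply: a_supp.
  move=> n.
  apply: (sub_finite_set (B := [set c | phi (Uall R) (tks Sig 1 0) c c != 0] `&` [set c | cmod c <= n])).
    by move=> c [h1 h2]; split.
  apply: locfin_disc => t.
  case: (sfunP (phi (Uall R) (tks Sig 1 0))) => _ _ h3.
  have [e [e0 fe]] := h3 t I; exists e => //.
  apply: sub_finite_set fe => c [h1 h2]; by exists c.
- move=> phi psi Hphi Hpsi E U s t c.
  rewrite (reprF Hphi) (reprF Hpsi); apply: eq_fsbigr => x _.
  rewrite (gE phi) (gE psi) /g.
  by have := congr1 (fun F => F (c - x)) E => /= ->.
- move=> f Hf; exists (phif HS Hf); split; first exact: phif_equiv.
  by apply/funext => e; apply: phif_val.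
- by move=> phi psi chi _ _ _ E; apply/funext => e; rewrite E.
- move=> phi psi Hphi Hpsi; apply/funext => e /=.
  rewrite (reprF Hphi) /lam_conv (reindex_fsbigT (fun c => e - c)); last first.
    by exists (fun c => e - c) => c; exact: subKr.
  apply: eq_fsbigr => c _; rewrite subKr -[psi _ _ e (e - c)]/(g psi e (e - c)).
  rewrite (gE psi) subKr /g.
  case: asboolP => Zc; first by rewrite mulrC.
  have -> : phi (Uall R) (tks Sig 1 0) c c = 0.
    by apply/eqP; apply: contraT => /(a_supp Hphi).
  by rewrite !mul0r.
- apply/funext => e /=; rewrite /tk /monom subr0.
  case: (e =P 0) => [E|] //=; rewrite asboolT //; subst e; exact: Z0.
- move=> d Zd; split.
    exists (phif HS (@monom_L0 R Sig d Zd)); split; first exact: phif_equiv.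
    move=> U s t e; rewrite /= /convf; case: asboolP => // _.
    rewrite (fsbigTE [fset d]%fset); last first.
      move=> c; rewrite inE /monom => /negbTE ->; by rewrite mul0r.
    by rewrite big_seq_fset1 /monom eqxx mul1r.
  move=> phi Hphi Hsh; apply/funext => e.
  rewrite Hsh subrr asboolT; last exact: Z0.
  rewrite /= /tk /monom subr0 subr_eq0.
  case: (e =P d) => [E|] //=; rewrite asboolT //; subst e; exact: Zd.
Qed.
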